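(* Let $S$ be a semidomain that is additively reduced, additively Furstenberg, and satisfies $\mathscr{A}_+(S)=S^\times$, and let $G$ be a torsion-free abelian group. Let $f=s_0x^{g_0}+s_1x^{g_1}+s_2x^{g_2}\in S[G]$ with $s_0,s_1,s_2\in S\setminus\{0\}$ and $g_0>g_1>g_2$ in $G$. If $s_0,s_1,s_2\in S^\times$ then $f$ is irreducible; otherwise $f$ is the sum of two irreducible elements of $S[G]$.
   Context: A semidomain is a subsemiring (containing $0$ and $1$) of an integral domain; $S^\times$ is the unit group of the multiplicative monoid $S\setminus\{0\}$. $S$ is additively reduced if $0$ is the only invertible element of $(S,+)$. An additive atom is a nonzero $a\in S$ with $a=b+c$ implying $b=0$ or $c=0$; $\mathscr{A}_+(S)$ is the set of additive atoms. $S$ is additively Furstenberg if every nonzero $s\in S$ equals $a+t$ with $a\in\mathscr{A}_+(S)$, $t\in S$. $G$ carries a fixed total order compatible with addition. $S[G]$ is the semidomain of formal finite sums $\sum_{g\in G}s_gx^g$ with polynomial operations. $f\in S[G]$ is irreducible if it is nonzero, a nonunit, and $f=pq$ implies $p$ or $q$ is a unit of $S[G]$. *)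

(* Defs.v *)
From HB Require Import structures.
From mathcomp Require Import all_boot all_order all_algebra.
Set Implicit Arguments. Unset Strict Implicit. Unset Printing Implicit Defensive.
Import GRing.Theory.
Local Open Scope ring_scope.

(* A semidomain is modelled as a predicate S on an integral domain R,
   containing 0 and 1 and closed under + and *. *)
Definition semidomain (R : idomainType) (S : {pred R}) : Prop :=
  [/\ 0 \in S, 1 \in S,
      (forall a b, a \in S -> b \in S -> a + b \in S) &
      (forall a b, a \in S -> b \in S -> a * b \in S)].

Definition Sunit (R : idomainType) (S : {pred R}) (s : R) : Prop :=
  s \in S /\ exists t, t \in S /\ s * t = 1.

Definition add_reduced (R : idomainType) (S : {pred R}) : Prop :=
  forall a, a \in S -> (exists b, b \in S /\ a + b = 0) -> a = 0.

Definition add_atom (R : idomainType) (S : {pred R}) (a : R) : Prop :=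
  [/\ a \in S, a != 0 &
      forall b c, b \in S -> c \in S -> a = b + c -> b = 0 \/ c = 0].

Definition add_Furstenberg (R : idomainType) (S : {pred R}) : Prop :=
  forall s, s \in S -> s != 0 ->
    exists a t, [/\ add_atom S a, t \in S & s = a + t].

Definition ordered_group (G : zmodType) (lt : rel G) : Prop :=
  [/\ (forall x, ~~ lt x x),
      (forall x y z, lt x y -> lt y z -> lt x z),
      (forall x y, x != y -> lt x y || lt y x) &
      (forall x y z, lt x y -> lt (x + z) (y + z))].

Definition torsion_free (G : zmodType) : Prop :=
  forall (g : G) (n : nat), g *+ n.+1 = 0 -> g = 0.

(* Elements of S[G]: formal finite sums sum_i s_i x^{g_i}, represented by
   lists of pairs (s_i, g_i); two lists denote the same element iff they have
   the same coefficient function. *)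
Section GroupSemiring.
Variables (R : idomainType) (G : zmodType).

Definition coef (l : seq (R * G)) (g : G) : R := \sum_(a <- l | a.2 == g) a.1.
Definition sg_eq (l1 l2 : seq (R * G)) : Prop := forall g, coef l1 g = coef l2 g.
Definition sg_add (l1 l2 : seq (R * G)) := l1 ++ l2.
Definition sg_mul (l1 l2 : seq (R * G)) : seq (R * G) :=
  [seq (a.1 * b.1, a.2 + b.2) | a <- l1, b <- l2].
Definition sg_one : seq (R * G) := [:: (1, 0)].
Definition sg_zero : seq (R * G) := [::].

Variable S : {pred R}.
Definition in_SG (l : seq (R * G)) : bool := all (fun a => a.1 \in S) l.

Definition sg_unit (u : seq (R * G)) : Prop :=
  in_SG u /\ exists v, in_SG v /\ sg_eq (sg_mul u v) sg_one.

Definition sg_irreducible (f : seq (R * G)) : Prop :=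
  [/\ in_SG f, ~ sg_eq f sg_zero, ~ sg_unit f &
      forall p q, in_SG p -> in_SG q -> sg_eq f (sg_mul p q) ->
        sg_unit p \/ sg_unit q].
End GroupSemiring.

(* Main.v *)
Require Import Defs.
From HB Require Import structures.
From mathcomp Require Import all_boot all_order all_algebra.
From mathcomp Require Import ring.
From Stdlib Require Import Classical.
Set Implicit Arguments. Unset Strict Implicit. Unset Printing Implicit Defensive.
Import GRing.Theory.
Local Open Scope ring_scope.

Lemma coefM (R : idomainType) (G : zmodType) (p q : seq (R * G)) g :
  coef (sg_mul p q) g = \sum_(a <- p) a.1 * coef q (g - a.2).
Proof.
rewrite /coef /sg_mul big_mkcond big_allpairs_dep /=.
apply: eq_bigr => a _; rewrite mulr_sumr [RHS]big_mkcond /=.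
apply: eq_bigr => b _.
have -> : (a.2 + b.2 == g) = (b.2 == g - a.2).
  by apply/eqP/eqP => [<-|->]; [rewrite (addrC a.2) addrK | rewrite addrC subrK].
by case: (_ == _); rewrite ?mulr0.
Qed.

Lemma coefC (R : idomainType) (G : zmodType) (p q : seq (R * G)) g :
  coef (sg_mul p q) g = coef (sg_mul q p) g.
Proof.
rewrite /coef /sg_mul big_mkcond [RHS]big_mkcond !big_allpairs_dep /= exchange_big /=.
apply: eq_bigr => a _; apply: eq_bigr => b _.
by rewrite addrC mulrC.
Qed.

Lemma coef_cat (R : idomainType) (G : zmodType) (p q : seq (R * G)) g :
  coef (sg_add p q) g = coef p g + coef q g.
Proof. by rewrite /coef /sg_add big_cat. Qed.

Lemma sum_inS (R : idomainType) (S : {pred R}) (T : eqType) (l : seq T) (P : pred T) (F : T -> R) :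
  semidomain S -> (forall i, i \in l -> F i \in S) -> \sum_(i <- l | P i) F i \in S.
Proof.
case=> S0 S1 SD SM; elim: l => [|x l IH] FS; first by rewrite big_nil.
have FS' : forall i, i \in l -> F i \in S by move=> i il; apply: FS; rewrite inE il orbT.
rewrite big_cons; case: (P x); last exact: IH.
by apply: SD; [apply: FS; rewrite inE eqxx | exact: IH].
Qed.

Lemma red2 (R : idomainType) (S : {pred R}) a b :
  add_reduced S -> a \in S -> b \in S -> a + b = 0 -> a = 0 /\ b = 0.
Proof.
move=> hr aS bS ab; split; first by apply: hr => //; exists b.
by apply: hr => //; exists a; rewrite addrC.
Qed.

Lemma sum_eq0 (R : idomainType) (S : {pred R}) (T : eqType) (l : seq T) (P : pred T) (F : T -> R) :
  semidomain S -> add_reduced S -> (forall i, i \in l -> F i \in S) ->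
  \sum_(i <- l | P i) F i = 0 -> forall i, i \in l -> P i -> F i = 0.
Proof.
move=> sd hr; elim: l => [|x l IH] //= FS H i.
have FS' : forall i, i \in l -> F i \in S by move=> j jl; apply: FS; rewrite inE jl orbT.
have sS := @sum_inS R S T l P F sd FS'.
move: H; rewrite big_cons inE; case Px: (P x) => H.
  have [h1 h2] := red2 hr (FS x (mem_head _ _)) sS H.
  by case/orP => [/eqP->//|il Pi]; apply: IH.
by case/orP => [/eqP-> Px'|il Pi]; [rewrite Px' in Px|apply: IH].
Qed.

Lemma coefS (R : idomainType) (S : {pred R}) (G : zmodType) (p : seq (R * G)) g :
  semidomain S -> in_SG S p -> coef p g \in S.
Proof.
move=> sd; have [S0 S1 SD SM] := sd; rewrite /coef.
elim: p => [|x l IH]; first by rewrite big_nil.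
rewrite /in_SG /= => /andP[xS lS]; rewrite big_cons; case: (_ == _) => //; last exact: IH.
by apply: SD => //; apply: IH.
Qed.

Lemma inSG_mem (R : idomainType) (S : {pred R}) (G : zmodType) (p : seq (R * G)) a :
  in_SG S p -> a \in p -> a.1 \in S.
Proof. by move=> /allP H /H. Qed.

Lemma entry_coef (R : idomainType) (S : {pred R}) (G : zmodType) (p : seq (R * G)) a :
  semidomain S -> add_reduced S -> in_SG S p -> a \in p -> a.1 != 0 -> coef p a.2 != 0.
Proof.
move=> sd hr pS ap a0; apply/eqP => H.
have := @sum_eq0 R S _ p (fun b => b.2 == a.2) fst sd hr _ H a ap (eqxx _).
by move=> /(_ (fun i => inSG_mem pS)) /eqP; rewrite (negbTE a0).
Qed.

Lemma coef_ex (R : idomainType) (G : zmodType) (p : seq (R * G)) g :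
  coef p g != 0 -> exists2 a, a \in p & (a.2 == g) && (a.1 != 0).
Proof.
move=> H; case: (boolP (has (fun a : R * G => (a.2 == g) && (a.1 != 0)) p)) => [/hasP[a ap /andP[]]|/hasPn nh].
  by exists a => //; apply/andP.
case/eqP: H; rewrite /coef big1_seq // => a /andP[ag ap]; apply/eqP.
by move: (nh a ap); rewrite ag /= negbK.
Qed.

Lemma suppM (R : idomainType) (S : {pred R}) (G : zmodType) (p q : seq (R * G)) h k :
  semidomain S -> add_reduced S -> in_SG S p -> in_SG S q ->
  coef p h != 0 -> coef q k != 0 -> coef (sg_mul p q) (h + k) != 0.
Proof.
move=> sd hr pS qS ph qk; have [S0 S1 SD SM] := sd.
case: (coef_ex ph) => a ap /andP[/eqP ah a0].
rewrite coefM; apply/eqP => H.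
have := @sum_eq0 R S _ p predT (fun a => a.1 * coef q (h + k - a.2)) sd hr _ H a ap isT.
move/(_ (fun i ip => SM _ _ (inSG_mem pS ip) (coefS _ sd qS))).
rewrite ah (addrC h) addrK => /eqP; by rewrite mulf_eq0 (negbTE a0) (negbTE qk).
Qed.

Lemma monoM (R : idomainType) (S : {pred R}) (G : zmodType) (p q : seq (R * G)) x g :
  semidomain S -> add_reduced S -> in_SG S p ->
  (forall h, coef p h != 0 -> h = x) ->
  coef (sg_mul p q) g = coef p x * coef q (g - x).
Proof.
move=> sd hr pS px; rewrite coefM [coef p x]/coef mulr_suml [RHS]big_mkcond.
apply: eq_big_seq => a ap /=.
case: eqP => [->//|ax].
case: (a.1 =P 0) => [->|/eqP a0]; first by rewrite mul0r.
by exfalso; apply: ax; apply: px; exact: (entry_coef sd hr pS ap a0).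
Qed.


Lemma mono_unit (R : idomainType) (S : {pred R}) (G : zmodType) (p : seq (R * G)) x c :
  semidomain S -> add_reduced S -> in_SG S p ->
  (forall h, coef p h != 0 -> h = x) -> c \in S -> coef p x * c = 1 -> sg_unit S p.
Proof.
move=> sd hr pS px cS pc; split => //; exists [:: (c, -x)]; split.
  by rewrite /in_SG /= andbT.
move=> g; rewrite (monoM _ g sd hr pS px) [coef [:: _] _]/coef /sg_one /coef !big_cons !big_nil /=.
have -> : (-x == g - x) = (0 == g).
  by rewrite -{1}(sub0r x) (inj_eq (addIr (-x))).
by case: (0 == g); rewrite ?addr0 ?mulr0.
Qed.

Lemma not_unit (R : idomainType) (S : {pred R}) (G : zmodType) (f : seq (R * G)) y z :
  semidomain S -> add_reduced S -> in_SG S f -> y != z -> coef f y != 0 -> coef f z != 0 -> ~ sg_unit S f.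
Proof.
move=> sd hr fS yz fy fz [_ [v [vS fv]]].
have supp1 : forall g, coef (sg_mul f v) g != 0 -> g = 0.
  move=> g; rewrite fv /coef /sg_one big_cons big_nil /=.
  by case: (0 =P g) => [->|]; rewrite ?eqxx.
have [k vk] : exists k, coef v k != 0.
  apply: NNPP => nk; have := fv 0; rewrite coefM big1.
    by rewrite /coef /sg_one big_cons big_nil /= eqxx addr0 => /eqP; rewrite eq_sym oner_eq0.
  move=> a _; case: (coef v (0 - a.2) =P 0) => [->|/eqP h]; first by rewrite mulr0.
  by case: nk; exists (0 - a.2).
have h1 := supp1 _ (suppM sd hr fS vS fy vk).
have h2 := supp1 _ (suppM sd hr fS vS fz vk).
by move/eqP: yz; apply; apply: (addIr k); rewrite h1 h2.
Qed.

Lemma dich (R : idomainType) (G : zmodType) (p : seq (R * G)) :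
  (exists x y, x != y /\ coef p x != 0 /\ coef p y != 0) \/
  exists x, forall h, coef p h != 0 -> h = x.
Proof.
case: (classic (exists x y, x != y /\ coef p x != 0 /\ coef p y != 0)) => [H|H]; [by left|right].
case: (classic (exists x, coef p x != 0)) => [[x px]|H2].
  exists x => h ph; apply: NNPP => hx; apply: H; exists h, x; split => //; exact/eqP.
by exists 0 => h ph; exfalso; apply: H2; exists h.
Qed.

Lemma irr_crit (R : idomainType) (S : {pred R}) (G : zmodType) (lt : rel G) (f : seq (R * G)) y0 z0 :
  semidomain S -> add_reduced S -> ordered_group lt -> in_SG S f ->
  y0 != z0 -> coef f y0 != 0 -> coef f z0 != 0 -> (exists g, Sunit S (coef f g)) ->
  (forall p q x y u v, in_SG S p -> in_SG S q -> sg_eq f (sg_mul p q) -> lt y x -> lt v u ->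
     coef p x != 0 -> coef p y != 0 -> coef q u != 0 -> coef q v != 0 -> False) ->
  sg_irreducible S f.
Proof.
move=> sd hr ord fS yz fy fz [g [_ [t [tS gt]]]] Hbad.
have [S0 S1 SD SM] := sd.
split => //.
- by move=> H; move: (H y0) fy; rewrite [coef (sg_zero _ _) _]/coef big_nil => ->; rewrite eqxx.
- exact: (not_unit sd hr fS yz fy fz).
move=> p q pS qS fpq.
have mono_case : forall p q, in_SG S p -> in_SG S q -> sg_eq f (sg_mul p q) ->
    (exists x, forall h, coef p h != 0 -> h = x) -> sg_unit S p.
  move=> p' q' p'S q'S fpq' [x px].
  apply: (@mono_unit _ _ _ p' x (coef q' (g - x) * t) sd hr p'S px).
    by apply: SM => //; apply: coefS.
  by rewrite mulrA -(monoM _ g sd hr p'S px) -fpq'.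
case: (dich p) => [[x [y [xy [px py]]]]|hp]; last by left; apply: (mono_case p q).
case: (dich q) => [[u [v [uv [qu qv]]]]|hq].
  have [_ _ tot _] := ord; exfalso.
  case/orP: (tot _ _ xy) => hxy; case/orP: (tot _ _ uv) => huv.
  + exact: (Hbad p q y x v u).
  + exact: (Hbad p q y x u v).
  + exact: (Hbad p q x y v u).
  + exact: (Hbad p q x y u v).
right; apply: (mono_case q p) => // h; rewrite fpq coefC //.
Qed.

Ltac finlt irr tr :=
  match goal with
  | H : is_true (?lt ?x ?x) |- _ => by have := irr x; rewrite H
  | H1 : is_true (?lt ?x ?y), H2 : is_true (?lt ?y ?x) |- _ =>
      by have := irr x; rewrite (tr _ _ _ H1 H2)
  end.

Lemma chain2 (G : zmodType) (lt : rel G) a b c1 c2 c3 :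
  ordered_group lt -> lt c2 c1 -> lt c3 c2 ->
  (c1 = a \/ c1 = b) -> (c2 = a \/ c2 = b) -> (c3 = a \/ c3 = b) -> False.
Proof.
case=> irr tr _ _ h21 h32; have h31 := tr _ _ _ h32 h21.
case=> E1; case=> E2; case=> E3; subst; finlt irr tr.
Qed.

Lemma chain3 (G : zmodType) (lt : rel G) g0 g1 g2 c1 c2 c3 :
  ordered_group lt -> lt g1 g0 -> lt g2 g1 -> lt c2 c1 -> lt c3 c2 ->
  (c1 = g0 \/ c1 = g1 \/ c1 = g2) -> (c2 = g0 \/ c2 = g1 \/ c2 = g2) ->
  (c3 = g0 \/ c3 = g1 \/ c3 = g2) -> c2 = g1.
Proof.
case=> irr tr _ _ h10 h21 hc21 hc32; have hc31 := tr _ _ _ hc32 hc21.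
have h20 := tr _ _ _ h21 h10.
case=> [E1|[E1|E1]]; case=> [E2|[E2|E2]]; case=> [E3|[E3|E3]]; subst => //; finlt irr tr.
Qed.

Lemma lt_addl (G : zmodType) (lt : rel G) x u v :
  ordered_group lt -> lt v u -> lt (x + v) (x + u).
Proof. by case=> _ _ _ c h; rewrite ![x + _]addrC; apply: c. Qed.

Lemma lt_addr (G : zmodType) (lt : rel G) x y v :
  ordered_group lt -> lt y x -> lt (y + v) (x + v).
Proof. by case=> _ _ _ c h; apply: c. Qed.

Lemma lt_neq (G : zmodType) (lt : rel G) x y :
  ordered_group lt -> lt y x -> y != x.
Proof. by case=> irr _ _ _ h; apply/eqP => E; move: h; rewrite E (negbTE (irr x)). Qed.

Lemma coef2 (R : idomainType) (G : zmodType) (c d : R) (a b g : G) :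
  coef [:: (c, a); (d, b)] g = (if a == g then c else 0) + (if b == g then d else 0).
Proof. by rewrite /coef !big_cons big_nil /=; case: (a == g); case: (b == g); rewrite ?addr0 ?add0r. Qed.

Lemma coef3 (R : idomainType) (G : zmodType) (c d e : R) (a b k g : G) :
  coef [:: (c, a); (d, b); (e, k)] g =
  (if a == g then c else 0) + (if b == g then d else 0) + (if k == g then e else 0).
Proof.
by rewrite /coef !big_cons big_nil /=; case: (a == g); case: (b == g); case: (k == g);
  rewrite ?addr0 ?add0r ?addrA.
Qed.

Lemma binom_irr (R : idomainType) (S : {pred R}) (G : zmodType) (lt : rel G) c d (a b : G) :
  semidomain S -> add_reduced S -> ordered_group lt -> c \in S -> d \in S ->
  c != 0 -> d != 0 -> a != b -> (Sunit S c \/ Sunit S d) ->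
  sg_irreducible S [:: (c, a); (d, b)].
Proof.
move=> sd hr ord cS dS c0 d0 ab hu.
have ba : b != a by rewrite eq_sym.
have fa : coef [:: (c, a); (d, b)] a = c by rewrite coef2 eqxx (negbTE ba) addr0.
have fb : coef [:: (c, a); (d, b)] b = d by rewrite coef2 eqxx (negbTE ab) add0r.
have supp : forall g, coef [:: (c, a); (d, b)] g != 0 -> g = a \/ g = b.
  move=> g; rewrite coef2; case: (a =P g) => [<-|_]; first by left.
  case: (b =P g) => [<-|_]; first by right.
  by rewrite addr0 eqxx.
apply: (@irr_crit _ _ _ lt _ a b sd hr ord) => //.
- by rewrite /in_SG /= cS dS.
- by rewrite fa.
- by rewrite fb.
- by case: hu => h; [exists a; rewrite fa | exists b; rewrite fb].
move=> p q x y u v pS qS fpq hxy huv px py qu qv.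
have sp : forall h k, coef p h != 0 -> coef q k != 0 -> h + k = a \/ h + k = b.
  by move=> h k ph qk; apply: supp; rewrite fpq; exact: (suppM sd hr pS qS ph qk).
exact: (chain2 ord (lt_addl x ord huv) (lt_addr v ord hxy)
  (sp _ _ px qu) (sp _ _ px qv) (sp _ _ py qv)).
Qed.

Lemma trinom_irr (R : idomainType) (S : {pred R}) (G : zmodType) (lt : rel G) s0 s1 s2 (g0 g1 g2 : G) :
  semidomain S -> add_reduced S -> ordered_group lt -> s0 \in S -> s1 \in S -> s2 \in S ->
  s0 != 0 -> s1 != 0 -> s2 != 0 -> lt g1 g0 -> lt g2 g1 ->
  Sunit S s1 -> add_atom S s1 ->
  sg_irreducible S [:: (s0, g0); (s1, g1); (s2, g2)].
Proof.
move=> sd hr ord s0S s1S s2S s00 s10 s20 h10 h21 hu [_ _ hat].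
have [S0 S1 SD SM] := sd.
have h20 : lt g2 g0 by case: ord => _ tr _ _; apply: tr h21 h10.
have n10 := lt_neq ord h10; have n21 := lt_neq ord h21; have n20 := lt_neq ord h20.
set f := [:: (s0, g0); (s1, g1); (s2, g2)].
have f0 : coef f g0 = s0 by rewrite coef3 eqxx (negbTE n10) (negbTE n20) !addr0.
have f1 : coef f g1 = s1.
  by rewrite coef3 eqxx (negbTE n21) eq_sym (negbTE n10) add0r addr0.
have supp : forall g, coef f g != 0 -> g = g0 \/ g = g1 \/ g = g2.
  move=> g; rewrite coef3; case: (g0 =P g) => [<-|_]; first by left.
  case: (g1 =P g) => [<-|_]; first by right; left.
  case: (g2 =P g) => [<-|_]; first by right; right.
  by rewrite !addr0 eqxx.
apply: (@irr_crit _ _ _ lt _ g0 g1 sd hr ord) => //.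
- by rewrite /in_SG /= s0S s1S s2S.
- by rewrite eq_sym.
- by rewrite f0.
- by rewrite f1.
- by exists g1; rewrite f1.
move=> p q x y u v pS qS fpq hxy huv px py qu qv.
have sp : forall h k, coef p h != 0 -> coef q k != 0 -> h + k = g0 \/ h + k = g1 \/ h + k = g2.
  by move=> h k ph qk; apply: supp; rewrite fpq; exact: (suppM sd hr pS qS ph qk).
have e1 : x + v = g1.
  exact: (chain3 ord h10 h21 (lt_addl x ord huv) (lt_addr v ord hxy)
    (sp _ _ px qu) (sp _ _ px qv) (sp _ _ py qv)).
have e2 : y + u = g1.
  exact: (chain3 ord h10 h21 (lt_addr u ord hxy) (lt_addl y ord huv)
    (sp _ _ px qu) (sp _ _ py qu) (sp _ _ py qv)).
have yx := lt_neq ord hxy.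
move: f1; rewrite fpq coefM (bigID (fun a => a.2 == x)) /=.
set A := \sum_(i <- p | _) _; set B := \sum_(i <- p | _) _ => hs.
have termS : forall i, i \in p -> i.1 * coef q (g1 - i.2) \in S.
  by move=> i ip; apply: SM; [exact: inSG_mem pS ip | exact: coefS].
have AS : A \in S by apply: sum_inS.
have BS : B \in S by apply: sum_inS.
have A0 : A != 0.
  have -> : A = coef p x * coef q v.
    rewrite /A /coef mulr_suml; apply: eq_bigr => i /eqP ->.
    by rewrite -e1 (addrC x) addrK.
  by rewrite mulf_neq0.
have B0 : B != 0.
  case: (coef_ex py) => a ap /andP[/eqP ay a0].
  apply/eqP => HB.
  have := @sum_eq0 R S _ p (fun i => ~~ (i.2 == x)) (fun i => i.1 * coef q (g1 - i.2)) sd hr termS HB a ap.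
  rewrite ay yx => /(_ isT) /eqP; rewrite -e2 (addrC y) addrK mulf_eq0 (negbTE a0) (negbTE qu).
  by [].
case: (hat A B AS BS (esym hs)) => /eqP; by rewrite ?(negbTE A0) ?(negbTE B0).
Qed.

Lemma unit_nz (R : idomainType) (S : {pred R}) a : Sunit S a -> a \in S /\ a != 0.
Proof.
case=> aS [t [_ at1]]; split => //; apply/eqP => a0.
by move: at1; rewrite a0 mul0r => /eqP; rewrite eq_sym oner_eq0.
Qed.

Theorem lemma3p5 (R : idomainType) (S : {pred R}) (G : zmodType) (lt : rel G)
  (s0 s1 s2 : R) (g0 g1 g2 : G) :
  semidomain S -> add_reduced S -> add_Furstenberg S ->
  (forall a, add_atom S a <-> Sunit S a) ->
  torsion_free G -> ordered_group lt ->
  s0 \in S -> s1 \in S -> s2 \in S -> s0 != 0 -> s1 != 0 -> s2 != 0 ->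
  lt g1 g0 -> lt g2 g1 ->
  let f := [:: (s0, g0); (s1, g1); (s2, g2)] in
  ((Sunit S s0 /\ Sunit S s1 /\ Sunit S s2) -> sg_irreducible S f) /\
  (~ (Sunit S s0 /\ Sunit S s1 /\ Sunit S s2) ->
     exists p q, [/\ sg_irreducible S p, sg_irreducible S q &
                     sg_eq f (sg_add p q)]).
Proof.
move=> sd hr hF hA _ ord s0S s1S s2S n0 n1 n2 h10 h21 f.
have h20 : lt g2 g0 by case: ord => _ tr _ _; apply: tr h21 h10.
have n10 := lt_neq ord h10; have n21 := lt_neq ord h21; have n20 := lt_neq ord h20.
have n01 : g0 != g1 by rewrite eq_sym.
have n12 : g1 != g2 by rewrite eq_sym.
have n02 : g0 != g2 by rewrite eq_sym.
have furst : forall s, s \in S -> s != 0 -> ~ Sunit S s ->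
    exists a t, [/\ Sunit S a, t \in S, t != 0 & s = a + t].
  move=> s sS s0' nu; case: (hF s sS s0') => a [t [aat tS E]].
  exists a, t; split => //; first exact/hA.
  apply/eqP => t0; apply: nu; rewrite E t0 addr0; exact/hA.
split.
  by move=> [_ [u1 _]]; apply: (trinom_irr sd hr ord) => //; exact: (hA _).2.
move=> nu.
case: (classic (Sunit S s1)) => u1.
  case: (classic (Sunit S s0)) => u0.
    have u2 : ~ Sunit S s2 by move=> u2; apply: nu.
    have [a [t [ua tS t0 E]]] := furst _ s2S n2 u2.
    have [aS a0] := unit_nz ua.
    exists [:: (s0, g0); (a, g2)], [:: (s1, g1); (t, g2)]; split.
    - by apply: (binom_irr sd hr ord) => //; left.
    - by apply: (binom_irr sd hr ord) => //; left.
    move=> g; rewrite coef_cat /f coef3 !coef2 E.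
    by case: (g0 == g); case: (g1 == g); case: (g2 == g); ring.
  have [a [t [ua tS t0 E]]] := furst _ s0S n0 u0.
  have [aS a0] := unit_nz ua.
  exists [:: (t, g0); (s1, g1)], [:: (a, g0); (s2, g2)]; split.
  - by apply: (binom_irr sd hr ord) => //; right.
  - by apply: (binom_irr sd hr ord) => //; left.
  move=> g; rewrite coef_cat /f coef3 !coef2 E.
  by case: (g0 == g); case: (g1 == g); case: (g2 == g); ring.
have [a1 [t1 [ua1 t1S t10 E1]]] := furst _ s1S n1 u1.
have [a1S a10] := unit_nz ua1.
case: (classic (Sunit S s0)) => u0.
  exists [:: (s0, g0); (t1, g1)], [:: (a1, g1); (s2, g2)]; split.
  - by apply: (binom_irr sd hr ord) => //; left.
  - by apply: (binom_irr sd hr ord) => //; left.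
  move=> g; rewrite coef_cat /f coef3 !coef2 E1.
  by case: (g0 == g); case: (g1 == g); case: (g2 == g); ring.
have [a0 [t0 [ua0 t0S t00 E0]]] := furst _ s0S n0 u0.
have [a0S a00] := unit_nz ua0.
exists [:: (t0, g0); (a1, g1); (s2, g2)], [:: (a0, g0); (t1, g1)]; split.
- by apply: (trinom_irr sd hr ord) => //; exact: (hA _).2.
- by apply: (binom_irr sd hr ord) => //; left.
move=> g; rewrite coef_cat /f !coef3 !coef2 E0 E1.
by case: (g0 == g); case: (g1 == g); case: (g2 == g); ring.
Qed.
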